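(* In the semi-discrete setting described in the context, let $c\in\mathcal{F}(\mathring\Omega_h)$ and let $X$ be a solution of \[\begin{cases}-\partial_tX+AX=c\,\delta_{t=T},\\ X(0)=0,\\ X|_{\Gamma^0}=0,\\ X|_{\Gamma^1}=0.\end{cases}\] Then $X\equiv0$, and consequently $c=0$.
   Context: Let $h>0$, integers $M,N\ge2$, grid $\Omega_h=\{(ih,jh):0\le i\le M,0\le j\le N\}$ with nodes indexed $(i,j)$, interior $\mathring\Omega_h=\{1\le i\le M-1,1\le j\le N-1\}$; $\Gamma^0=\{(0,j):0\le j\le N\}$ and $\Gamma^1=\{(1,j):1\le j\le N-1\}$; functions on $\mathring\Omega_h$ are extended by $0$ on all boundary nodes. $A$ is the 5-point discrete Dirichlet Laplacian $[A\phi]_{(i,j)}=h^{-2}(4\phi_{(i,j)}-\phi_{(i+1,j)}-\phi_{(i-1,j)}-\phi_{(i,j+1)}-\phi_{(i,j-1)})$. The equation with right-hand side $c\,\delta_{t=T}$ is understood in the distributional sense in time: $-\partial_tX+AX=0$ on $[0,T)$ and on $(T,\infty)$, with the jump $X(T^+)-X(T^-)=c$. *)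

(* Defs.v *)
From Stdlib Require Import Reals Lra Lia.
From Coquelicot Require Import Coquelicot.
Open Scope R_scope.

(* Grid functions: nodes (i,j) with 0 <= i <= M, 0 <= j <= N, indexed by nat. *)
Definition gridfun := nat -> nat -> R.

Definition interior_node (M N i j : nat) : Prop :=
  (1 <= i <= M - 1)%nat /\ (1 <= j <= N - 1)%nat.

Definition interiorb (M N i j : nat) : bool :=
  (Nat.leb 1 i && Nat.leb i (M - 1) && Nat.leb 1 j && Nat.leb j (N - 1))%bool.

Definition ext (M N : nat) (phi : gridfun) : gridfun :=
  fun i j => if interiorb M N i j then phi i j else 0.

Definition Alap (h : R) (M N : nat) (phi : gridfun) (i j : nat) : R :=
  let p := ext M N phi in
  / (h ^ 2) * (4 * p i j - p (S i) j - p (i - 1)%nat j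
               - p i (S j) - p i (j - 1)%nat).

(* Main.v *)
Require Import Defs.
From Stdlib Require Import Reals Lra Lia.
From Coquelicot Require Import Coquelicot.
Open Scope R_scope.

Lemma interiorb_iff M N i j : interiorb M N i j = true <-> interior_node M N i j.
Proof.
  unfold interiorb, interior_node.
  rewrite !Bool.andb_true_iff, !Nat.leb_le. tauto.
Qed.

Lemma ext_int M N p i j : interior_node M N i j -> ext M N p i j = p i j.
Proof. intro H. unfold ext. apply interiorb_iff in H. now rewrite H. Qed.

Lemma ext_col M N p i j : (forall j', interior_node M N i j' -> p i j' = 0) ->
  ext M N p i j = 0.
Proof.
  intro H. unfold ext. destruct (interiorb M N i j) eqn:E; auto.
  apply H, interiorb_iff, E.
Qed.

Lemma ball_R (x e y : R) : Rabs (y - x) < e -> ball x e y.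
Proof. intro H. exact H. Qed.

Lemma deriv_zero (f : R -> R) (T t l : R) : 0 < T -> (0 < t < T \/ T < t) ->
  (forall s, 0 <= s -> s <> T -> f s = 0) -> is_derive f t l -> l = 0.
Proof.
  intros HT Ht Hf Hd.
  assert (Hl : locally t (fun s => f s = (fun _ : R => 0) s)).
  { assert (He : 0 < Rmin t (Rabs (t - T))).
    { apply Rmin_pos. lra. apply Rabs_pos_lt. lra. }
    exists (mkposreal _ He). intros y Hy. simpl in Hy.
    change (Rabs (y - t) < Rmin t (Rabs (t - T))) in Hy.
    pose proof (Rmin_l t (Rabs (t - T))). pose proof (Rmin_r t (Rabs (t - T))).
    apply Hf.
    - apply Rabs_def2 in Hy. lra.
    - intro E; subst y. rewrite <- Rabs_Ropp in Hy.
      replace (- (T - t)) with (t - T) in Hy by ring. lra. }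
  pose proof (is_derive_ext_loc _ _ _ _ Hl Hd) as H2.
  apply is_derive_unique in H2.
  pose proof (is_derive_unique _ _ _ (is_derive_const (V:=R_NormedModule) 0 t)).
  rewrite <- H2. exact H.
Qed.

Theorem theorem2p22 (h T : R) (M N : nat) (c : gridfun) (X : R -> gridfun) :
  0 < h -> (2 <= M)%nat -> (2 <= N)%nat -> 0 < T ->
  (* -dX/dt + A X = 0 on (0,T) and on (T, +oo) *)
  (forall t, (0 < t < T \/ T < t) ->
     forall i j, interior_node M N i j ->
       is_derive (fun s => X s i j) t (Alap h M N (X t) i j)) ->
  (* X(0) = 0, with X continuous at 0 from the right *)
  (forall i j, interior_node M N i j ->
     X 0 i j = 0 /\ filterlim (fun s => X s i j) (at_right 0) (locally 0)) ->
  (* jump condition X(T^+) - X(T^-) = c *)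
  (forall i j, interior_node M N i j ->
     exists lm lp : R,
       filterlim (fun s => X s i j) (at_left T) (locally lm) /\
       filterlim (fun s => X s i j) (at_right T) (locally lp) /\
       lp - lm = c i j) ->
  (* X = 0 on Gamma^0 *)
  (forall t, 0 <= t -> t <> T -> forall j, (j <= N)%nat -> ext M N (X t) 0%nat j = 0) ->
  (* X = 0 on Gamma^1 *)
  (forall t, 0 <= t -> t <> T -> forall j, (1 <= j <= N - 1)%nat -> X t 1%nat j = 0) ->
  (forall t, 0 <= t -> t <> T -> forall i j, interior_node M N i j -> X t i j = 0) /\
  (forall i j, interior_node M N i j -> c i j = 0).
Proof.
  intros Hh HM HN HT Hd H0 Hc HG0 HG1.
  assert (Main : forall k, forall t, 0 <= t -> t <> T -> forall i j,
            (i <= S k)%nat -> interior_node M N i j -> X t i j = 0).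
  { induction k as [|k IH]; intros t Ht0 HtT i j Hi Hij.
    - destruct Hij as [Hi1 Hj]. assert (i = 1%nat) by lia. subst. now apply HG1.
    - destruct (Nat.le_gt_cases i (S k)) as [Hle|Hgt]; [now apply (IH t) |].
      assert (i = S (S k)) by lia. subst i.
      destruct (Rle_lt_or_eq_dec 0 t Ht0) as [Htp|Ht0'].
      2:{ subst t. apply H0, Hij. }
      destruct Hij as [Hi1 Hj].
      assert (Hint : interior_node M N (S k) j) by (split; lia).
      assert (Hz : forall s, 0 <= s -> s <> T -> X s (S k) j = 0)
        by (intros s Hs1 Hs2; apply (IH s); auto).
      assert (Htt : 0 < t < T \/ T < t).
      { destruct (Rlt_or_le t T); [left; lra | right]. destruct H; [lra|congruence]. }
      pose proof (deriv_zero _ T t _ HT Htt Hz (Hd t Htt _ _ Hint)) as HA.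
      unfold Alap in HA. cbv zeta in HA.
      assert (Zc : forall i, (i <= S k)%nat -> forall j', ext M N (X t) i j' = 0).
      { intros i0 Hi0 j'. apply ext_col. intros j'' Hn.
        destruct Hn as [Hn1 Hn2]. apply (IH t); auto. split; lia. }
      rewrite (Zc (S k) (le_n _)), (Zc (S k - 1)%nat ltac:(lia)),
        (Zc (S k) (le_n _) (S j)), (Zc (S k) (le_n _) (j - 1)%nat) in HA.
      rewrite ext_int in HA by (split; lia).
      assert (Hh2 : / h ^ 2 <> 0) by (apply Rinv_neq_0_compat; apply pow_nonzero; lra).
      apply Rmult_integral in HA. destruct HA as [HA|HA]; [contradiction|]. lra. }
  assert (Z : forall t, 0 <= t -> t <> T -> forall i j, interior_node M N i j -> X t i j = 0).
  { intros t Ht1 Ht2 i j Hij. apply (Main i t); auto. }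
  split; [exact Z|].
  intros i j Hij. destruct (Hc i j Hij) as [lm [lp [Hl [Hr E]]]].
  assert (Elm : lm = 0).
  { apply (filterlim_locally_unique (FF:=Proper_StrongProper _ (at_left_proper_filter T))
             (fun _ : R => 0)); [|apply filterlim_const].
    eapply filterlim_ext_loc; [|exact Hl].
    exists (mkposreal _ HT). intros y Hy Hy2. simpl in Hy.
    change (Rabs (y - T) < T) in Hy. apply Rabs_def2 in Hy.
    apply Z; auto; lra. }
  assert (Elp : lp = 0).
  { apply (filterlim_locally_unique (FF:=Proper_StrongProper _ (at_right_proper_filter T))
             (fun _ : R => 0)); [|apply filterlim_const].
    eapply filterlim_ext_loc; [|exact Hr].
    exists (mkposreal _ HT). intros y Hy Hy2.
    apply Z; auto; lra. }
  lra.
Qed.
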